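(* Let $\mathcal{X}$ be a finite set and $\underline{Q}$ a lower transition rate operator on $\mathcal{L}(\mathcal{X})$. Let $f\in\mathcal{L}(\mathcal{X})$ and $x\in\mathcal{X}$ be such that $f(x)>\min f$. Then $\underline{T}_tf(x)>\min f$ for all $t\ge0$.
   Context: $\mathcal{L}(\mathcal{X})$ is the set of real-valued functions on $\mathcal{X}$ with pointwise operations and order, real constants identified with constant functions, $\mathbb{I}_y$ the indicator of $\{y\}$. A lower transition rate operator is a map $\underline{Q}\colon\mathcal{L}(\mathcal{X})\to\mathcal{L}(\mathcal{X})$ such that for all $f,g$, $\lambda\ge0$, $\mu\in\mathbb{R}$, $x,y\in\mathcal{X}$: $\underline{Q}(\mu)=0$; $\underline{Q}(f+g)\ge\underline{Q}f+\underline{Q}g$; $\underline{Q}(\lambda f)=\lambda\underline{Q}f$; $x\ne y\Rightarrow\underline{Q}(\mathbb{I}_y)(x)\ge0$. For each $f$, $t\mapsto\underline{T}_tf$ is the unique solution on $[0,\infty)$ of $\frac{d}{dt}\underline{T}_tf=\underline{Q}\,\underline{T}_tf$ with $\underline{T}_0f=f$ (existence and uniqueness are known). *)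

(* Defs.v *)
From HB Require Import structures.
From mathcomp Require Import all_boot all_order all_algebra.
From mathcomp Require Import all_classical all_reals topology normedtype derive.
Set Implicit Arguments. Unset Strict Implicit. Unset Printing Implicit Defensive.
Import Order.TTheory GRing.Theory Num.Theory.
Import numFieldNormedType.Exports.
Local Open Scope classical_set_scope.
Local Open Scope ring_scope.

(* L(X) = X -> R, with pointwise operations; constants as constant functions. *)

Definition indic {R : realType} {X : finType} (y : X) : X -> R :=
  fun z => if z == y then 1 else 0.

Definition lower_rate_op {R : realType} {X : finType}
  (Q : (X -> R) -> (X -> R)) : Prop :=
  [/\ (forall (mu : R) (z : X), Q (fun _ => mu) z = 0),
      (forall (f g : X -> R) (z : X), Q f z + Q g z <= Q (fun w => f w + g w) z),
      (forall (lam : R) (f : X -> R) (z : X), 0 <= lam ->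
          Q (fun w => lam * f w) z = lam * Q f z)
    & (forall x y : X, x != y -> 0 <= Q (indic y) x)].

(* T : R -> L(X) solves d/dt T_t = Q T_t on [0, +oo) with T_0 = f
   (two-sided derivative for t > 0, right derivative at t = 0). *)
Definition solves_lower_ode {R : realType} {X : finType}
  (Q : (X -> R) -> (X -> R)) (f : X -> R) (T : R -> X -> R) : Prop :=
  [/\ T 0 = f,
      (forall t : R, 0 < t -> forall y : X,
          is_derive t 1 (fun s => T s y) (Q (T t) y))
    & (forall y : X,
          (fun h : R => h^-1 * (T h y - T 0 y)) @ (0 : R)^'+ --> Q (T 0) y)].

(* min f over the finite nonempty set X (x0 any element, used as seed) *)
Definition fmin {R : realType} {X : finType} (f : X -> R) (x0 : X) : R :=
  \big[Num.min/f x0]_(y : X) f y.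

(* Main.v *)
Require Import Defs.
From HB Require Import structures.
From mathcomp Require Import all_boot all_order all_algebra.
From mathcomp Require Import all_classical all_reals topology normedtype derive.
From mathcomp Require Import sequences exp.
From mathcomp Require Import lra.
Import Order.TTheory GRing.Theory Num.Theory.
Import numFieldNormedType.Exports.
Local Open Scope classical_set_scope.
Local Open Scope ring_scope.
Section S.
Variables (R : realType).

Lemma left_deriv_le0 (f : R -> R) (t d eta : R) : 0 < eta ->
  is_derive t 1 f d -> (forall u, t - eta < u -> u < t -> f t <= f u) -> d <= 0.
Proof.
move=> eta0 [df dv] H; rewrite -dv.
have cv : (fun h : R => h^-1 *: ((f \o shift t) (h *: 1) - f t)) @ (0:R)^' --> 'D_1 f t := df.
have cvl : (fun h : R => h^-1 *: ((f \o shift t) (h *: 1) - f t)) @ (0:R)^'- --> 'D_1 f t.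
  apply: cvg_trans cv; apply: cvg_app.
  move=> A [e egt0 Ae]; exists e => // x xe xlt0; apply: Ae => //.
  exact/ltr0_neq0.
rewrite leNgt; apply/negP => dpos.
have Hn := @cvgr_gt R _ (0:R)^'- _ _ _ cvl _ dpos.
have {}Hn := Hn (at_left_proper_filter _).
have Hn2 : \forall h \near (0:R)^'-, (- eta < h) && (h < 0).
  near=> h; apply/andP; split; last by near: h; exact: nbhs_left_lt.
  near: h; apply: nbhs_left_gt; rewrite oppr_lt0 //.
have [h [H1 /andP[H2 H3]]] := filter_ex (filterI Hn Hn2).
have hA : h%:A = h :> R by exact: mulr1.
move: H1; rewrite /= /shift hA.
have : f t <= f (h + t).
  apply: H; first by rewrite ltrBlDl; lra.
  by rewrite gtrDr.
rewrite -subr_ge0 => le.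
apply/negP; rewrite -leNgt.
apply: mulr_le0_ge0 => //; rewrite invr_le0 ltW //.
Unshelve. all: by end_near. Qed.

Lemma der_cont (f : R -> R) t : derivable f t 1 -> f u @[u --> t] --> f t.
Proof. by move=> /derivable1_diffP/differentiable_continuous. Qed.

Lemma barrier (X : finType) (g : X -> R -> R) :
  (forall y, 0 < g y 0) ->
  (forall y, g y s @[s --> (0:R)^'+] --> g y 0) ->
  (forall t, 0 < t -> forall y, derivable (g y) t 1) ->
  (forall t, 0 < t -> forall y, (forall z, 0 <= g z t) -> g y t = 0 ->
      0 < 'D_1 (g y) t) ->
  forall t, 0 <= t -> forall y, 0 < g y t.
Proof.
move=> h0 hc0 hd hk t1 t10 y1.
rewrite ltNge; apply/negP => bad.
pose A := [set s : R | 0 <= s /\ forall u y, 0 <= u -> u <= s -> 0 < g y u].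
have A0 : A 0.
  split => // u y u0 u0'.
  by have -> : u = 0 by apply/eqP; rewrite eq_le u0 u0'.
have Aub : forall s, A s -> s < t1.
  move=> s [s0 Hs]; rewrite ltNge; apply/negP => st.
  by have := Hs t1 y1 t10 st; rewrite ltNge bad.
have hsup : has_sup A.
  split; first by exists 0.
  by exists t1 => s /Aub /ltW.
set tau := sup A.
have tau0 : 0 <= tau := sup_upper_bound hsup A0.
have before : forall u y, 0 <= u -> u < tau -> 0 < g y u.
  move=> u y u0 ut.
  have [a [_ Ha] ua] := sup_adherent (eq_ind_r is_true ut (subr_gt0 u tau)) hsup.
  apply: Ha => //; apply: ltW; move: ua; rewrite /tau; lra.
have notall : ~ (forall y, 0 < g y tau).
  move=> allpos.
  have rc : forall y, g y u @[u --> tau^'+] --> g y tau.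
    move=> y; have [->|tneq] := eqVneq tau 0; first exact: hc0.
    apply: cvg_at_right_filter; apply: der_cont; apply: hd.
    by rewrite lt_neqAle eq_sym tneq tau0.
  have H : \forall u \near tau^'+, forall y, 0 < g y u.
    apply: filter_forall => y.
    have := @cvgr_gt R _ tau^'+ _ _ _ (rc y) _ (allpos y).
    by apply.
  have [e e0 He] : exists2 e : R, 0 < e & forall u, `|tau - u| < e -> tau < u -> forall y, 0 < g y u.
    by move: H => /nbhs_ballP[e e0 He]; exists e.
  have Ae : A (tau + e / 2).
    split; first by lra.
    move=> u y u0 ue.
    have [ut|tu|->] := ltgtP u tau.
    - exact: before.
    - apply: He => //; rewrite ltr0_norm ?subr_lt0 //; lra.
    - exact: allpos.
  have := sup_upper_bound hsup Ae; rewrite -/tau; lra.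
have [y0 hy0] : exists y, g y tau <= 0.
  case: (pselect (exists y, g y tau <= 0)) => // nex.
  exfalso; apply: notall => y; rewrite ltNge; apply/negP => Hy.
  by apply: nex; exists y.
have taupos : 0 < tau.
  rewrite lt_neqAle tau0 andbT; apply/negP => /eqP t0.
  by move: hy0; rewrite -t0 leNgt h0.
have allnn : forall z, 0 <= g z tau.
  move=> z; rewrite leNgt; apply/negP => neg.
  have cl := cvg_at_left_filter (@der_cont (g z) tau (hd _ taupos z)).
  have H1 := @cvgr_lt R _ tau^'- _ _ _ cl _ neg.
  have H2 : \forall u \near tau^'-, (tau / 2 < u) && (u < tau).
    near=> u; apply/andP; split; last by near: u; exact: nbhs_left_lt.
    near: u; apply: nbhs_left_gt; lra.
  have [u [Hu /andP[Hu1 Hu2]]] := filter_ex (filterI (H1 (at_left_proper_filter _)) H2).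
  have tu : 0 < tau / 2 by lra.
  have := before u z (ltW (lt_trans tu Hu1)) Hu2.
  by rewrite ltNge (ltW Hu).
have ge0 : g y0 tau = 0 by apply/eqP; rewrite eq_le hy0 allnn.
have dpos := hk _ taupos y0 allnn ge0.
have := @left_deriv_le0 (g y0) tau _ tau taupos (derivableP (hd _ taupos y0)).
move=> H; have : 'D_1 (g y0) tau <= 0.
  apply: H => u Hu1 Hu2. rewrite ge0 ltW //; apply: before => //; lra.
by rewrite leNgt dpos.
Unshelve. all: by end_near. Qed.
End S.

Section Q.
Variables (R : realType) (X : finType) (Q : (X -> R) -> (X -> R)).
Hypothesis hQ : lower_rate_op Q.

Lemma Qshift (h : X -> R) (mu : R) z : Q (fun w => h w + mu) z = Q h z.
Proof.
case: hQ => Qc Qs Qh Qi.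
apply/eqP; rewrite eq_le; apply/andP; split.
  have := Qs (fun w => h w + mu) (fun _ => - mu) z.
  rewrite Qc addr0.
  have -> : (fun w => h w + mu + - mu) = h by apply/funext => w; rewrite addrK.
  by [].
by have := Qs h (fun _ => mu) z; rewrite Qc addr0.
Qed.

Lemma Qsum (I : Type) (s : seq I) (F : I -> X -> R) z :
  \sum_(i <- s) Q (F i) z <= Q (fun w => \sum_(i <- s) F i w) z.
Proof.
case: hQ => Qc Qs Qh Qi.
elim: s => [|a s IH].
  rewrite big_nil.
  have -> : (fun w => \sum_(i <- [::]) F i w) = (fun _ => 0) by apply/funext => w; rewrite big_nil.
  by rewrite Qc.
rewrite big_cons.
have -> : (fun w => \sum_(i <- a :: s) F i w) = (fun w => F a w + \sum_(i <- s) F i w).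
  by apply/funext => w; rewrite big_cons.
apply: le_trans (Qs _ _ z); exact: lerD.
Qed.

Lemma Qpos (k : X -> R) z : (forall w, 0 <= k w) -> k z * Q (indic z) z <= Q k z.
Proof.
move=> kge.
have Qh := hQ; case: Qh => Qc Qs Qh Qi.
have ek : k = (fun w => \sum_(y : X) k y * indic y w).
  apply/funext => w; rewrite (bigD1 w) //= /indic eqxx mulr1 big1 ?addr0 //.
  by move=> y /negbTE; rewrite eq_sym => ->; rewrite mulr0.
rewrite {2}ek; apply: le_trans (Qsum _ _ _ _).
under eq_bigr do rewrite Qh //.
rewrite (bigD1 z) //= -[X in X <= _]addr0 lerD2l.
apply: sumr_ge0 => y yz; apply: mulr_ge0 => //.
by apply: Qi; rewrite eq_sym.
Qed.

Lemma fmin_le (f : X -> R) x y : fmin f x <= f y.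
Proof.
rewrite /fmin.
have : y \in index_enum X by rewrite mem_index_enum.
elim: (index_enum X) => [//|a s IH]; rewrite big_cons inE => /orP[/eqP->|ys].
  by rewrite ge_min lexx.
by rewrite ge_min IH ?orbT.
Qed.
End Q.
Lemma rc_quot (R : realType) (u : R -> R) (L : R) :
  (fun h : R => h^-1 * (u h - u 0)) @ (0:R)^'+ --> L ->
  u h @[h --> (0:R)^'+] --> u 0.
Proof.
move=> cq.
have c1 : (fun h : R => u 0 + h * (h^-1 * (u h - u 0))) @ (0:R)^'+ --> u 0 + 0 * L.
  have H1 : (fun _ : R => u 0) @ (0:R)^'+ --> u 0 by exact: cvg_cst.
  have H0 : (fun h : R => h) @ (0:R)^'+ --> (0:R) by exact: (cvg_at_right_filter cvg_id).
  have H2 : (fun h : R => h * (h^-1 * (u h - u 0))) @ (0:R)^'+ --> 0 * L.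
    exact: (@cvgM _ _ _ (at_right_proper_filter 0) _ _ _ _ H0 cq).
  exact: (@cvgD _ _ _ _ (at_right_proper_filter 0) _ _ _ _ H1 H2).
rewrite mul0r addr0 in c1.
have E : {near (0:R)^'+, (fun h : R => u 0 + h * (h^-1 * (u h - u 0))) =1 u}.
  near=> h.
  have hn : h != 0 by near: h; exact: nbhs_right_neq.
  by rewrite /= mulrA mulfV // mul1r addrC subrK.
exact: (cvg_trans (near_eq_cvg E) c1).
Unshelve. all: by end_near. Qed.
Lemma daff (R : realType) (a b : R) (s : R) : is_derive s 1 (fun s : R => a * s + b) a.
Proof.
have H1 : is_derive s 1 (fun s : R => a * s) (a * 1).
  exact: (@is_deriveZ _ _ _ id a s 1 1 (is_derive_id _ _)).
have H2 := @is_deriveD _ _ _ _ _ s 1 _ _ H1 (is_derive_cst b s 1).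
by rewrite mulr1 addr0 in H2.
Qed.

Lemma dE (R : realType) (N : nat) (s : R) :
  is_derive s 1 (fun s : R => expR s ^+ N) (N%:R * expR s ^+ N.-1 * expR s).
Proof.
have H := is_deriveX N (is_derive_expR s).
rewrite exprfctE in H.
exact H.
Qed.
Theorem lemma5 (R : realType) (X : finType) (Q : (X -> R) -> (X -> R))
  (f : X -> R) (T : R -> X -> R) (x : X) :
  lower_rate_op Q ->
  solves_lower_ode Q f T ->
  fmin f x < f x ->
  forall t : R, 0 <= t -> fmin f x < T t x.
Proof.
move=> hQ [T0f Td Tr] hfx.
have T0 : forall y, T 0 y = f y by move=> y; rewrite T0f.
clear T0f.
set m := fmin f x in hfx *.
have mle : forall y, m <= f y := fun y => @fmin_le R X f x y.
have Trc : forall y, T s y @[s --> (0:R)^'+] --> T 0 y.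
  by move=> y; apply: (@rc_quot R (fun s => T s y) (Q (T 0) y)); exact: Tr.
have Tge : forall t, 0 <= t -> forall y, m <= T t y.
  move=> t t0 y; apply/ler_addgt0Pr => e e0.
  pose eps := e / (1 + t).
  have eps0 : 0 < eps by rewrite divr_gt0 //; lra.
  have epse : eps * t + eps = e.
    rewrite /eps -{2}(mulr1 (e / (1 + t))) -mulrDr addrC divfK //; lra.
  have Daff := @daff R eps (eps - m).
  have B := @barrier R X (fun (z : X) (s : R) => T s z + (eps * s + (eps - m))).
  have : 0 < T t y + (eps * t + (eps - m)); last by lra.
  apply: B => //.
  - move=> z; rewrite T0 mulr0 add0r; have := mle z; lra.
  - move=> z.
    have Ha : (fun s : R => eps * s + (eps - m)) @ (0:R)^'+ --> eps * 0 + (eps - m).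
      apply: cvg_at_right_filter; apply: der_cont. by case: (Daff 0).
    exact: (@cvgD _ _ _ _ (at_right_proper_filter 0) _ _ _ _ (Trc z) Ha).
  - move=> s sp z.
    by case: (is_deriveD (Td s sp z) (Daff s)) => H _; exact H.
  - move=> s sp z allz gz0.
    have dv : 'D_1 (fun s : R => T s z + (eps * s + (eps - m))) s = Q (T s) z + eps.
      by case: (is_deriveD (Td s sp z) (Daff s)) => _ H; exact H.
    rewrite dv.
    have mn : forall w, T s z <= T s w.
      by move=> w; have := allz w; lra.
    have : 0 <= Q (T s) z.
      rewrite -(@Qshift R X Q hQ (T s) (- T s z)).
      apply: le_trans (@Qpos R X Q hQ _ _ _) => /=; first by rewrite subrr mul0r.
      by move=> w /=; have := mn w; lra.
    lra.
move=> t t0.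
set c := `|Q (indic x) x|.
set N := (Num.truncn c).+1.
have Nc : c < N%:R := truncnS_gt c.
have c0 : 0 <= c := normr_ge0 _.
pose d := (f x - m) / 2.
have d0 : 0 < d by rewrite /d divr_gt0 //; lra.
have DE := @dE R N.
have B := @barrier R X (fun (_ : X) (s : R) => expR s ^+ N * (T s x - m) - d).
have Ep : 0 < expR t ^+ N := exprn_gt0 _ (expR_gt0 t).
have : 0 < expR t ^+ N * (T t x - m) - d.
  apply: B => //.
  - move=> _; rewrite expR0 expr1n mul1r T0 /d; lra.
  - move=> _.
    have HE : (fun s : R => expR s ^+ N) @ (0:R)^'+ --> expR 0 ^+ N.
      apply: cvg_at_right_filter; apply: der_cont; by case: (DE 0).
    have HT : (fun s : R => T s x - m) @ (0:R)^'+ --> T 0 x - m.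
      exact: (@cvgB _ _ _ _ (at_right_proper_filter 0) _ _ _ _ (Trc x) (cvg_cst m)).
    have HM := @cvgM _ _ _ (at_right_proper_filter 0) _ _ _ _ HE HT.
    exact: (@cvgB _ _ _ _ (at_right_proper_filter 0) _ _ _ _ HM (cvg_cst d)).
  - move=> s sp _.
    by case: (is_deriveB (is_deriveM (DE s) (is_deriveB (Td s sp x) (is_derive_cst m s 1))) (is_derive_cst d s 1)) => H _; exact H.
  - move=> s sp _ allz g0.
    have dv : 'D_1 (fun s : R => expR s ^+ N * (T s x - m) - d) s =
       expR s ^+ N * (Q (T s) x - 0) + (T s x - m) * (N%:R * expR s ^+ N.-1 * expR s) - 0.
      by case: (is_deriveB (is_deriveM (DE s) (is_deriveB (Td s sp x) (is_derive_cst m s 1))) (is_derive_cst d s 1)) => _ H; exact H.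
    rewrite dv.
    have eqE : expR s ^+ N.-1 * expR s = expR s ^+ N by rewrite /N /= -exprSr.
    rewrite -mulrA eqE !subr0.
    have Es : 0 < expR s ^+ N := exprn_gt0 _ (expR_gt0 s).
    have k0 : 0 <= T s x - m by rewrite subr_ge0; apply: Tge; exact: ltW.
    have qa : - c <= Q (indic x) x.
      by rewrite lerNl /c -normrN; exact: ler_norm.
    have qk : (T s x - m) * Q (indic x) x <= Q (T s) x.
      rewrite -(@Qshift R X Q hQ (T s) (- m)).
      apply: (@Qpos R X Q hQ (fun w => T s w + - m) x) => w /=.
      by rewrite subr_ge0; apply: Tge; exact: ltW.
    have qk2 : - c * (T s x - m) <= Q (T s) x.
      apply: le_trans qk; rewrite mulrC; exact: ler_wpM2l.
    have h1 : - c * d <= expR s ^+ N * Q (T s) x.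
      have -> : - c * d = expR s ^+ N * (- c * (T s x - m)).
        have -> : d = expR s ^+ N * (T s x - m) by apply/eqP; rewrite eq_sym -subr_eq0; apply/eqP; exact: g0.
        by rewrite mulrCA.
      by rewrite ler_pM2l.
    have h2 : (T s x - m) * (N%:R * expR s ^+ N) = N%:R * d.
      have -> : d = expR s ^+ N * (T s x - m) by apply/eqP; rewrite eq_sym -subr_eq0; apply/eqP; exact: g0.
      by rewrite mulrC -mulrA [_ * (T s x - m)]mulrC.
    have h3 : 0 < (N%:R - c) * d by rewrite mulr_gt0 // subr_gt0.
    rewrite h2.
    apply: (lt_le_trans h3).
    have -> : expR s ^+ N * Q (T s) x + N%:R * d = N%:R * d + expR s ^+ N * Q (T s) x by rewrite addrC.
    by rewrite mulrBl lerD2l -mulNr.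
rewrite subr_gt0 => H; have := lt_trans d0 H.
by rewrite pmulr_rgt0 // subr_gt0.
Qed.
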